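(* Let $H\subseteq F^7$ be the binary Hamming code of length 7 spanned by the vectors with supports $\{1,2,3\},\{1,4,5\},\{1,6,7\},\{2,4,6\}$. Let $\lambda_1:H\to\{0,1\}$ take the value $0$ exactly on $0^7$, $\{1,6,7\}$, $\{1,3,5,7\}$, $1^7$ (codewords given by supports) and $1$ on the other codewords, and let $\lambda_2:H\to\{0,1\}$ take the value $0$ exactly on $0^7$, $\{1,6,7\}$, $\{2,4,6\}$, $\{4,5,6,7\}$ and $1$ on the other codewords. Then the perfect codes $V22^1=V_H^{\lambda_1}$ and $V3^11=V_H^{\lambda_2}$ of length 15 are homogeneous, where $V_H^\lambda=\{(x+y,\ |x|+\lambda(y),\ x)\mid x\in F^7,\ y\in H\}$.
   Context: $|x|=x_1+\dots+x_7\pmod 2$. For a binary perfect code $C$ of length $m$ and a codeword $y\in C$, $STS(C,y)=\{\mathrm{supp}(x+y)\mid x\in C,\ d(x,y)=3\}$ (a Steiner triple system on $\{1,\dots,m\}$), where $d$ is Hamming distance. A perfect code $C$ containing $0^m$ is homogeneous if for every $y\in C$ there is a permutation $\pi\in S_m$ with $\pi(STS(C,y))=STS(C,0^m)$. *)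

(* Defs.v *)
(* Binary words of length m are finite functions 'I_m -> bool
   (bool = GF(2), addition = xor). Coordinates 1..m of the paper are 'I_m
   with index i standing for coordinate i+1. *)
From mathcomp Require Import all_boot fingroup perm.
Set Implicit Arguments. Unset Strict Implicit. Unset Printing Implicit Defensive.

Definition word (m : nat) := {ffun 'I_m -> bool}.

Definition zero_word (m : nat) : word m := [ffun=> false].
Definition addw (m : nat) (x y : word m) : word m := [ffun i => x i (+) y i].

Definition supp (m : nat) (x : word m) : {set 'I_m} := [set i | x i].
Definition hdist (m : nat) (x y : word m) : nat := #|[set i | x i != y i]|.

Definition wpar (m : nat) (x : word m) : bool := odd #|supp x|.

Definition perfect_code (m : nat) (C : {set word m}) : Prop :=
  forall x : word m, exists! c, c \in C /\ hdist x c <= 1.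

Definition STS (m : nat) (C : {set word m}) (y : word m) : {set {set 'I_m}} :=
  [set supp (addw x y) | x in C & hdist x y == 3].

Definition perm_sets (m : nat) (p : {perm 'I_m}) (S : {set {set 'I_m}})
  : {set {set 'I_m}} := [set (fun B : {set 'I_m} => [set p i | i in B]) B | B in S].

Definition homogeneous (m : nat) (C : {set word m}) : Prop :=
  [/\ perfect_code C, zero_word m \in C &
      forall y, y \in C -> exists p : {perm 'I_m},
        perm_sets p (STS C y) = STS C (zero_word m)].

(* word of length 7 from a (1-indexed) support *)
Definition w7 (s : seq nat) : word 7 := [ffun i : 'I_7 => (i.+1 \in s)].

Definition Hcomb (a b c d : bool) : word 7 :=
  [ffun i => (a && w7 [:: 1; 2; 3] i) (+) (b && w7 [:: 1; 4; 5] i)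
             (+) (c && w7 [:: 1; 6; 7] i) (+) (d && w7 [:: 2; 4; 6] i)].
Definition H7 : {set word 7} :=
  [set y | [exists a : bool, exists b : bool, exists c : bool, exists d : bool,
            y == Hcomb a b c d]].

Definition lambda1 (y : word 7) : bool :=
  y \notin [:: w7 [::]; w7 [:: 1; 6; 7]; w7 [:: 1; 3; 5; 7];
              w7 [:: 1; 2; 3; 4; 5; 6; 7]].
Definition lambda2 (y : word 7) : bool :=
  y \notin [:: w7 [::]; w7 [:: 1; 6; 7]; w7 [:: 2; 4; 6]; w7 [:: 4; 5; 6; 7]].

Definition cat15 (u : word 7) (b : bool) (x : word 7) : word 15 :=
  [ffun i : 'I_15 =>
     match ltnP i 7, ltnP 7 i with
     | LtnNotGeq h, _ => u (Ordinal h)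
     | _, LtnNotGeq h' => x (inord (i - 8))
     | _, _ => b
     end].

Definition Vasiliev (H : {set word 7}) (lam : word 7 -> bool) : {set word 15} :=
  [set cat15 (addw x y) (wpar x (+) lam y) x | x in [set: word 7], y in H].

(* Main.v *)
Require Import Defs.
From mathcomp Require Import all_boot fingroup perm.
From mathcomp Require Import zify.
Set Implicit Arguments. Unset Strict Implicit. Unset Printing Implicit Defensive.

Definition dec m (l : seq bool) : word m := [ffun i : 'I_m => nth false l i].
Definition xorL (l1 l2 : seq bool) := [seq x.1 (+) x.2 | x <- zip l1 l2].

Lemma size_xorL l1 l2 : size (xorL l1 l2) = minn (size l1) (size l2).
Proof. by rewrite size_map size_zip. Qed.

Lemma addw_dec m l1 l2 : size l1 = m -> size l2 = m ->
  addw (dec m l1) (dec m l2) = dec m (xorL l1 l2).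
Proof.
move=> s1 s2; apply/ffunP => i; rewrite !ffunE (nth_map (false, false)).
  by rewrite nth_zip // s1 s2.
by rewrite size_zip s1 s2 minnn.
Qed.

Lemma dec_inj m l l' : size l = m -> size l' = m -> (dec m l == dec m l') = (l == l').
Proof.
move=> s s'; apply/eqP/eqP => [E|->//].
apply: (@eq_from_nth _ false); first by rewrite s s'.
move=> i; rewrite s => hi.
by have := congr1 (fun f : word m => f (Ordinal hi)) E; rewrite !ffunE.
Qed.

Lemma dec_enc m (w : word m) : exists l, size l = m /\ w = dec m l.
Proof.
exists [seq w i | i <- enum 'I_m]; split; first by rewrite size_map size_enum_ord.
apply/ffunP => i; rewrite ffunE (nth_map i) ?size_enum_ord //.
by rewrite nth_ord_enum.
Qed.

Lemma card_supp m (x : word m) : #|supp x| = \sum_(i < m) x i.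
Proof.
rewrite -sum1_card big_mkcond /=; apply: eq_bigr => i _.
by rewrite /supp inE; case: (x i).
Qed.

Lemma wpar_add m (x y : word m) : wpar (addw x y) = wpar x (+) wpar y.
Proof.
rewrite /wpar !card_supp.
have E : \sum_(i < m) addw x y i + 2 * (\sum_(i < m) (x i && y i)) =
         \sum_(i < m) x i + \sum_(i < m) y i.
  rewrite big_distrr -!big_split /=; apply: eq_bigr => i _.
  by rewrite ffunE; case: (x i); case: (y i).
by rewrite -oddD -E oddD oddM /= addbF.
Qed.

Definition lft (w : word 15) : word 7 := [ffun i : 'I_7 => w (inord i)].
Definition rgt (w : word 15) : word 7 := [ffun i : 'I_7 => w (inord (i + 8))].
Definition mid (w : word 15) : bool := w (inord 7).
Definition catw (u : word 7) (b : bool) (x : word 7) : word 15 :=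
  [ffun i : 'I_15 => if i < 7 then u (inord i) else if i == 7 :> nat then b
                     else x (inord (i - 8))].

Lemma lft_catw u b x : lft (catw u b x) = u.
Proof.
apply/ffunP => i; rewrite !ffunE inordK; last by have := ltn_ord i; lia.
by rewrite ltn_ord inord_val.
Qed.

Lemma rgt_catw u b x : rgt (catw u b x) = x.
Proof.
apply/ffunP => i; rewrite !ffunE inordK; last by have := ltn_ord i; lia.
have -> : (i + 8 < 7) = false by lia.
have -> : (i + 8 == 7) = false by lia.
by rewrite addnK inord_val.
Qed.

Lemma mid_catw u b x : mid (catw u b x) = b.
Proof. by rewrite /mid ffunE inordK. Qed.

Lemma catw_surj w : w = catw (lft w) (mid w) (rgt w).
Proof.
apply/ffunP => j; rewrite !ffunE; case: ifP => h1.
  by rewrite inordK // inord_val.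
case: ifP => h2.
  by rewrite /mid; congr (w _); apply: val_inj; rewrite /= inordK //; apply/eqP.
rewrite inordK; last by have := ltn_ord j; lia.
have -> : j - 8 + 8 = j by move/negbT: h1; move/negbT: h2; lia.
by rewrite inord_val.
Qed.

Lemma addw_catw u b x u' b' x' :
  addw (catw u b x) (catw u' b' x') = catw (addw u u') (b (+) b') (addw x x').
Proof. by apply/ffunP => i; rewrite !ffunE; case: ifP => _; rewrite ?ffunE //; case: ifP => _; rewrite ?ffunE. Qed.

Lemma cat15E u b x : cat15 u b x = catw u b x.
Proof.
apply/ffunP => i; rewrite !ffunE.
case: (ltnP i 7) => h.
  by congr (u _); apply: val_inj; rewrite /= inordK.
case: (ltnP 7 i) => h'.
  by rewrite ifN // neq_ltn h' orbT.
by rewrite ifT // eqn_leq h h'.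
Qed.

Lemma catw_dec u b x : size u = 7 -> size x = 7 ->
  catw (dec 7 u) b (dec 7 x) = dec 15 (u ++ b :: x).
Proof.
move=> su sx; apply/ffunP => i; rewrite !ffunE nth_cat su.
case: ifP => h1; first by rewrite inordK.
case: ifP => h2; first by move/eqP: h2 => ->.
have -> : i - 7 = (i - 8).+1 by move/negbT: h1; move/negbT: h2; lia.
by rewrite /= inordK //; have := ltn_ord i; lia.
Qed.

Lemma lft_dec L : lft (dec 15 L) = dec 7 (take 7 L).
Proof. by apply/ffunP => i; rewrite !ffunE nth_take // inordK //; have := ltn_ord i; lia. Qed.

Lemma rgt_dec L : rgt (dec 15 L) = dec 7 (drop 8 L).
Proof.
apply/ffunP => i; rewrite !ffunE nth_drop inordK; last by have := ltn_ord i; lia.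
by rewrite addnC.
Qed.

Lemma mid_dec L : mid (dec 15 L) = nth false L 7.
Proof. by rewrite /mid ffunE inordK. Qed.

Lemma zero_dec m : zero_word m = dec m (nseq m false).
Proof. by apply/ffunP => i; rewrite !ffunE nth_nseq; case: ifP. Qed.

Lemma sum_count (s : seq nat) (f : nat -> bool) : \sum_(i <- s) (f i : nat) = count f s.
Proof. by elim: s => [|a s IH]; rewrite ?big_nil ?big_cons //= IH. Qed.

Lemma wpar_dec m l : size l = m -> wpar (dec m l) = odd (count id l).
Proof.
move=> sl; rewrite /wpar card_supp.
have -> : \sum_(i < m) dec m l i = \sum_(i < m) (nth false l i : nat).
  by apply: eq_bigr => i _; rewrite ffunE.
rewrite -(big_mkord xpredT (fun i => (nth false l i : nat))) /index_iota subn0.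
rewrite sum_count -{2}(mkseq_nth false l) /mkseq count_map sl.
by apply: congr1; apply: eq_count.
Qed.

Definition memb (H : {set word 7}) (lam : word 7 -> bool) (w : word 15) :=
  (addw (lft w) (rgt w) \in H) && (mid w == wpar (rgt w) (+) lam (addw (lft w) (rgt w))).

Lemma addwK' m (x y : word m) : addw (addw x y) x = y.
Proof. by apply/ffunP => i; rewrite !ffunE; case: (x i); case: (y i). Qed.
Lemma addwK m (x y : word m) : addw (addw x y) y = x.
Proof. by apply/ffunP => i; rewrite !ffunE; case: (x i); case: (y i). Qed.
Lemma addwKr m (x y : word m) : addw y (addw x y) = x.
Proof. by apply/ffunP => i; rewrite !ffunE; case: (x i); case: (y i). Qed.
Lemma addw_cancel m (a b x : word m) : addw (addw a x) (addw b x) = addw a b.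
Proof. by apply/ffunP => i; rewrite !ffunE; case: (a i); case: (b i); case: (x i). Qed.
Lemma addwA m (x y z : word m) : addw (addw x y) z = addw x (addw y z).
Proof. by apply/ffunP => i; rewrite !ffunE addbA. Qed.
Lemma add0w m (x : word m) : addw (zero_word m) x = x.
Proof. by apply/ffunP => i; rewrite !ffunE. Qed.

Lemma memC H lam w : (w \in Vasiliev H lam) = memb H lam w.
Proof.
apply/imset2P/andP.
  case=> x y _ hy ->; rewrite cat15E lft_catw rgt_catw mid_catw addwK'.
  by split.
case=> hs /eqP hm; exists (rgt w) (addw (lft w) (rgt w)) => //.
rewrite cat15E -hm addwKr.
exact: catw_surj.
Qed.

Definition kk (x : word 7) := catw x (wpar x) x.

Lemma memb_kk H lam w x : memb H lam (addw w (kk x)) = memb H lam w.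
Proof.
rewrite {1}(catw_surj w) /kk addw_catw /memb lft_catw rgt_catw mid_catw.
rewrite addw_cancel.
rewrite wpar_add; set s := addw _ _; congr andb.
by case: (mid w); case: (wpar x); case: (wpar (rgt w)); case: (lam s).
Qed.

Definition indw m (B : {set 'I_m}) : word m := [ffun i => i \in B].

Lemma STS_eq m (C : {set word m}) r :
  STS C r = [set B : {set 'I_m} | (#|B| == 3) && (addw (indw B) r \in C)].
Proof.
apply/setP => B; rewrite inE; apply/imsetP/andP.
  case=> x; rewrite inE => /andP [xC /eqP d3] ->.
  have E : supp (addw x r) = [set i | x i != r i].
    by apply/setP => i; rewrite !inE ffunE; case: (x i); case: (r i).
  split; first by rewrite E; apply/eqP.
  have -> : addw (indw (supp (addw x r))) r = x.
    by apply/ffunP => i; rewrite !ffunE inE ffunE; case: (x i); case: (r i).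
  done.
case=> /eqP c3 hC; exists (addw (indw B) r).
  rewrite inE hC /= /hdist; have -> : [set i | addw (indw B) r i != r i] = B.
    by apply/setP => i; rewrite !inE !ffunE; case: (i \in B); case: (r i).
  by rewrite c3.
by apply/setP => i; rewrite !inE !ffunE; case: (i \in B); case: (r i).
Qed.

Lemma STS_trans m (C : {set word m}) r k :
  (forall w, (addw w k \in C) = (w \in C)) -> STS C (addw r k) = STS C r.
Proof.
move=> hk; rewrite !STS_eq; apply/setP => B; by rewrite !inE -addwA hk.
Qed.

Lemma perm_setsE m (p : {perm 'I_m}) S :
  perm_sets p S = [set B : {set 'I_m} | [set (p^-1)%g i | i in B] \in S].
Proof.
apply/setP => B; rewrite inE; apply/imsetP/idP.
  case=> B' HB ->; rewrite -imset_comp.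
  have -> : [set ((p^-1)%g \o p) i | i in B'] = [set i | i in B'].
    by apply: eq_imset => i /=; rewrite permK.
  by rewrite imset_id.
move=> HB; exists [set (p^-1)%g i | i in B] => //.
rewrite -imset_comp.
have -> : [set (p \o (p^-1)%g) i | i in B] = [set i | i in B].
  by apply: eq_imset => i /=; rewrite permKV.
by rewrite imset_id.
Qed.

Definition flip m (r : word m) (i : 'I_m) : word m := [ffun j => r j (+) (j == i)].

Lemma hdist_le1 m (r c : word m) :
  hdist r c <= 1 -> c = r \/ exists i, c = flip r i.
Proof.
rewrite /hdist leq_eqVlt ltnS leqn0 => /orP [] /eqP.
  move/eqP/cards1P => [i Ei]; right; exists i; apply/ffunP => j; rewrite ffunE.
  move/setP: Ei => /(_ j); rewrite !inE.
  by case: (j == i) => /=; case: (r j); case: (c j) => // /negbFE.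
move/eqP; rewrite cards_eq0 => /eqP E; left; apply/ffunP => j.
move/setP: E => /(_ j); rewrite !inE.
by case: (r j); case: (c j).
Qed.

Lemma hdist_flip m (r : word m) i : hdist r (flip r i) = 1.
Proof.
rewrite /hdist; have -> : [set j | r j != flip r i j] = [set i].
  by apply/setP => j; rewrite !inE ffunE; case: (r j); case: (j == i).
by rewrite cards1.
Qed.

Lemma hdist0 m (r : word m) : hdist r r = 0.
Proof.
rewrite /hdist; apply/eqP; rewrite cards_eq0; apply/eqP/setP => j.
by rewrite !inE eqxx.
Qed.

Lemma hdist_add m (x y k : word m) : hdist (addw x k) (addw y k) = hdist x y.
Proof.
rewrite /hdist; apply: eq_card => i; rewrite !inE !ffunE.
by case: (x i); case: (y i); case: (k i).
Qed.

Definition HcL (a b c d : bool) : seq bool :=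
  [seq (a && (i.+1 \in [:: 1; 2; 3])) (+) (b && (i.+1 \in [:: 1; 4; 5]))
       (+) (c && (i.+1 \in [:: 1; 6; 7])) (+) (d && (i.+1 \in [:: 2; 4; 6]))
  | i <- iota 0 7].
Definition hc4 n := HcL (odd n) (odd (n %/ 2)) (odd (n %/ 4)) (odd (n %/ 8)).
Definition HL := map hc4 (iota 0 16).
Definition hL (l : seq bool) := l \in HL.

Lemma Hcomb_dec a b c d : Hcomb a b c d = dec 7 (HcL a b c d).
Proof.
apply/ffunP => i; rewrite !ffunE (nth_map 0) ?size_iota // nth_iota //.
Qed.

Lemma HcL_in a b c d : HcL a b c d \in HL.
Proof. by case: a; case: b; case: c; case: d; vm_compute. Qed.

Lemma size_HcL a b c d : size (HcL a b c d) = 7.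
Proof. by rewrite size_map size_iota. Qed.

Lemma hL_dec l : size l = 7 -> (dec 7 l \in H7) = hL l.
Proof.
move=> sl; rewrite inE /hL; apply/existsP/idP.
  case=> a /existsP [b /existsP [c /existsP [d]]].
  by rewrite Hcomb_dec dec_inj ?size_HcL // => /eqP ->; apply: HcL_in.
case/mapP => n _ ->; exists (odd n); apply/existsP; exists (odd (n %/ 2)).
apply/existsP; exists (odd (n %/ 4)); apply/existsP; exists (odd (n %/ 8)).
by rewrite Hcomb_dec.
Qed.

Definition w7L (s : seq nat) := [seq i.+1 \in s | i <- iota 0 7].
Lemma w7_dec s : w7 s = dec 7 (w7L s).
Proof. by apply/ffunP => i; rewrite !ffunE (nth_map 0) ?size_iota // nth_iota. Qed.
Lemma size_w7L s : size (w7L s) = 7.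
Proof. by rewrite size_map size_iota. Qed.

Definition lam1L (l : seq bool) :=
  l \notin [:: w7L [::]; w7L [:: 1; 6; 7]; w7L [:: 1; 3; 5; 7]; w7L [:: 1; 2; 3; 4; 5; 6; 7]].
Definition lam2L (l : seq bool) :=
  l \notin [:: w7L [::]; w7L [:: 1; 6; 7]; w7L [:: 2; 4; 6]; w7L [:: 4; 5; 6; 7]].

Lemma lam1_dec l : size l = 7 -> lambda1 (dec 7 l) = lam1L l.
Proof. by move=> sl; rewrite /lambda1 /lam1L !w7_dec !inE !dec_inj ?size_w7L. Qed.
Lemma lam2_dec l : size l = 7 -> lambda2 (dec 7 l) = lam2L l.
Proof. by move=> sl; rewrite /lambda2 /lam2L !w7_dec !inE !dec_inj ?size_w7L. Qed.

Definition membL (lamL : seq bool -> bool) (L : seq bool) :=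
  let s := xorL (take 7 L) (drop 8 L) in
  hL s && (nth false L 7 == odd (count id (drop 8 L)) (+) lamL s).

Lemma memb_dec lam lamL L :
  (forall l, size l = 7 -> lam (dec 7 l) = lamL l) -> size L = 15 ->
  memb H7 lam (dec 15 L) = membL lamL L.
Proof.
move=> hlam sL; have st : size (take 7 L) = 7 by rewrite size_take sL.
have sd : size (drop 8 L) = 7 by rewrite size_drop sL.
have sx : size (xorL (take 7 L) (drop 8 L)) = 7 by rewrite size_xorL st sd.
by rewrite /memb lft_dec rgt_dec mid_dec addw_dec // hL_dec // wpar_dec // hlam.
Qed.

Definition nbL (L : seq bool) k := [seq (nth false L t) (+) (t == k) | t <- iota 0 15].
Fixpoint allL n : seq (seq bool) :=
  if n is n'.+1 then [seq b :: l | b <- [:: true; false], l <- allL n'] else [:: [::]].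
Definition perfL lamL := all (fun u => all (fun b =>
  size [seq k <- iota 0 16 | membL lamL (nbL (u ++ b :: nseq 7 false) k)] == 1)
  [:: true; false]) (allL 7).
Definition indL (s : seq nat) a b c :=
  [seq [|| nth 0 s t == a, nth 0 s t == b | nth 0 s t == c] | t <- iota 0 15].
Definition repL (lamL : seq bool -> bool) hl := hl ++ lamL hl :: nseq 7 false.
Definition trip lamL s hl := all (fun a => all (fun b => all (fun c =>
   membL lamL (xorL (indL s a b c) (repL lamL hl)) == membL lamL (indL (iota 0 15) a b c))
   (iota 0 15)) (iota 0 15)) (iota 0 15).
Definition lookup (tab : seq (seq nat)) hl := nth [::] tab (index hl HL).
Definition chk lamL tab := [&& membL lamL (nseq 15 false), perfL lamL &
  all (fun hl => let s := lookup tab hl in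
     [&& uniq s, size s == 15, all (fun x => x < 15) s & trip lamL s hl]) HL].
Definition tab1 : seq (seq nat) := [:: [:: 0; 1; 2; 3; 4; 5; 6; 7; 8; 9; 10; 11; 12; 13; 14];
  [:: 1; 0; 2; 5; 11; 6; 12; 7; 9; 8; 10; 13; 3; 14; 4];
  [:: 1; 0; 10; 5; 3; 6; 12; 7; 9; 8; 2; 13; 11; 14; 4];
  [:: 0; 1; 10; 3; 12; 13; 6; 7; 8; 9; 2; 11; 4; 5; 14];
  [:: 1; 0; 2; 5; 3; 14; 4; 7; 9; 8; 10; 13; 11; 6; 12];
  [:: 0; 1; 2; 3; 4; 13; 14; 7; 8; 9; 10; 11; 12; 5; 6];
  [:: 0; 1; 2; 3; 4; 13; 14; 7; 8; 9; 10; 11; 12; 5; 6];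
  [:: 1; 0; 2; 5; 3; 6; 4; 7; 9; 8; 10; 13; 11; 14; 12];
  [:: 1; 0; 10; 5; 11; 14; 4; 7; 9; 8; 2; 13; 3; 6; 12];
  [:: 0; 1; 10; 3; 12; 13; 14; 7; 8; 9; 2; 11; 4; 5; 6];
  [:: 0; 1; 10; 3; 12; 13; 14; 7; 8; 9; 2; 11; 4; 5; 6];
  [:: 1; 0; 10; 5; 11; 6; 4; 7; 9; 8; 2; 13; 3; 14; 12];
  [:: 0; 1; 10; 3; 12; 5; 6; 7; 8; 9; 2; 11; 4; 13; 14];
  [:: 1; 0; 10; 5; 3; 6; 12; 7; 9; 8; 2; 13; 11; 14; 4];
  [:: 1; 0; 2; 5; 11; 6; 12; 7; 9; 8; 10; 13; 3; 14; 4];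
  [:: 0; 1; 2; 3; 4; 13; 6; 7; 8; 9; 10; 11; 12; 5; 14]].
Definition tab2 : seq (seq nat) := [:: [:: 0; 1; 2; 3; 4; 5; 6; 7; 8; 9; 10; 11; 12; 13; 14];
  [:: 2; 4; 5; 0; 9; 11; 6; 7; 10; 12; 13; 8; 1; 3; 14];
  [:: 2; 4; 13; 0; 1; 11; 14; 7; 10; 12; 5; 8; 9; 3; 6];
  [:: 0; 1; 10; 3; 12; 5; 6; 7; 8; 9; 2; 11; 4; 13; 14];
  [:: 2; 4; 5; 0; 9; 3; 14; 7; 10; 12; 13; 8; 1; 11; 6];
  [:: 0; 1; 2; 3; 12; 5; 6; 7; 8; 9; 10; 11; 4; 13; 14];
  [:: 0; 1; 2; 3; 12; 13; 6; 7; 8; 9; 10; 11; 4; 5; 14];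
  [:: 2; 4; 5; 0; 9; 11; 6; 7; 10; 12; 13; 8; 1; 3; 14];
  [:: 2; 4; 5; 0; 1; 11; 14; 7; 10; 12; 13; 8; 9; 3; 6];
  [:: 0; 1; 2; 3; 12; 5; 6; 7; 8; 9; 10; 11; 4; 13; 14];
  [:: 0; 1; 10; 3; 4; 5; 6; 7; 8; 9; 2; 11; 12; 13; 14];
  [:: 2; 4; 13; 0; 9; 11; 6; 7; 10; 12; 5; 8; 1; 3; 14];
  [:: 0; 1; 10; 3; 12; 13; 6; 7; 8; 9; 2; 11; 4; 5; 14];
  [:: 2; 4; 13; 0; 9; 11; 6; 7; 10; 12; 5; 8; 1; 3; 14];
  [:: 2; 4; 13; 0; 9; 3; 14; 7; 10; 12; 5; 8; 1; 11; 6];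
  [:: 0; 1; 10; 3; 12; 5; 6; 7; 8; 9; 2; 11; 4; 13; 14]].
Lemma chk1 : chk lam1L tab1. Proof. vm_compute. reflexivity. Qed.
Lemma chk2 : chk lam2L tab2. Proof. vm_compute. reflexivity. Qed.

Lemma mem_allL n l : size l = n -> l \in allL n.
Proof.
elim: n l => [|n IH] [|x l] //= [sl].
by case: x; rewrite /= !mem_cat map_f ?orbT ?IH.
Qed.

Lemma size_nbL L k : size (nbL L k) = 15.
Proof. by rewrite size_map size_iota. Qed.

Lemma nbL_ffun L k : dec 15 (nbL L k) = [ffun j : 'I_15 => nth false L j (+) (j == k :> nat)].
Proof. by apply/ffunP => j; rewrite !ffunE (nth_map 0) ?size_iota // nth_iota. Qed.

Lemma flip_nbL L (i : 'I_15) : flip (dec 15 L) i = dec 15 (nbL L i).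
Proof. by rewrite nbL_ffun; apply/ffunP => j; rewrite !ffunE. Qed.

Lemma nbL15 L : dec 15 (nbL L 15) = dec 15 L.
Proof.
rewrite nbL_ffun; apply/ffunP => j; rewrite !ffunE.
by have := ltn_ord j; case: (j == 15 :> nat) /eqP => [->|]; rewrite ?addbF.
Qed.

Lemma card3 m (B : {set 'I_m}) : #|B| = 3 ->
  exists a b c, forall i, (i \in B) = [|| i == a, i == b | i == c].
Proof.
move=> B3; have : 0 < #|B| by rewrite B3.
case/card_gt0P => a aB.
have : #|B :\ a| == 2 by move: B3; rewrite (cardsD1 a) aB add1n => -[->].
case/cards2P => b [c [_ E]]; exists a, b, c => i.
by rewrite -(setD1K aB) E !inE.
Qed.

Section Main.
Variables (lam : word 7 -> bool) (lamL : seq bool -> bool) (tab : seq (seq nat)).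
Hypothesis hlam : forall l, size l = 7 -> lam (dec 7 l) = lamL l.
Hypothesis hc : chk lamL tab.

Let C := Vasiliev H7 lam.

Lemma memCd L : size L = 15 -> (dec 15 L \in C) = membL lamL L.
Proof. by move=> sL; rewrite memC (memb_dec hlam). Qed.

Lemma kC x w : (addw w (kk x) \in C) = (w \in C).
Proof. by rewrite !memC memb_kk. Qed.

Lemma perf_r L : size L = 15 ->
  size [seq k <- iota 0 16 | membL lamL (nbL L k)] == 1 ->
  exists! c, c \in C /\ hdist (dec 15 L) c <= 1.
Proof.
move=> sL; case E: [seq k <- iota 0 16 | membL lamL (nbL L k)] => [|k0 [|]] //= _.
have : k0 \in [seq k <- iota 0 16 | membL lamL (nbL L k)] by rewrite E inE.
rewrite mem_filter mem_iota => /andP [Pk0 k0lt].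
have key : forall k, k < 16 -> dec 15 (nbL L k) \in C -> k = k0.
  move=> k klt; rewrite memCd ?size_nbL // => Pk.
  have : k \in [seq k <- iota 0 16 | membL lamL (nbL L k)] by rewrite mem_filter Pk mem_iota.
  by rewrite E inE => /eqP.
exists (dec 15 (nbL L k0)); split.
  split; first by rewrite memCd ?size_nbL.
  case: (ltnP k0 15) => h.
    by rewrite (_ : k0 = nat_of_ord (Ordinal h)) // -flip_nbL hdist_flip.
  have -> : k0 = 15 by apply/eqP; rewrite eqn_leq h andbT; case/andP: k0lt.
  by rewrite nbL15 hdist0.
move=> c' [c'C hd]; case: (hdist_le1 hd) => [Ec | [i Ec]].
  rewrite -nbL15 in Ec; rewrite Ec in c'C.
  by rewrite -(key 15 isT c'C) Ec.
rewrite flip_nbL in Ec; rewrite Ec in c'C.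
by rewrite -(key i (ltn_trans (ltn_ord i) (isT : 15 < 16)) c'C) Ec.
Qed.

Lemma perfC : perfect_code C.
Proof.
move=> w; case/and3P: hc => _ hP _.
have [l [sl El]] := dec_enc (addw (lft w) (rgt w)).
set b' := mid w (+) wpar (rgt w).
set L := l ++ b' :: nseq 7 false.
have sL : size L = 15 by rewrite /L size_cat sl.  
have Ew : w = addw (dec 15 L) (kk (rgt w)).
  rewrite /L -(catw_dec b' sl (size_nseq 7 false)) -zero_dec -El /kk addw_catw add0w addwK.
  by rewrite /b' -addbA addbb addbF -catw_surj.
have hr : exists! c, c \in C /\ hdist (dec 15 L) c <= 1.
  apply: perf_r => //.
  move/allP: hP => /(_ l (mem_allL sl)) /allP; apply.
  by case: (b').
case: hr => c [[cC hcd] cu].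
exists (addw c (kk (rgt w))); split.
  by rewrite kC cC {1}Ew hdist_add.
move=> c' [c'C hd].
have E : c = addw c' (kk (rgt w)).
  apply: cu; split; first by rewrite kC.
  by rewrite -(hdist_add _ _ (kk (rgt w))) -Ew addwK.
by rewrite E addwK.
Qed.

Lemma zeroC : zero_word 15 \in C.
Proof. by rewrite zero_dec memCd ?size_nseq //; case/and3P: hc. Qed.

Lemma inord_eq n (a : 'I_15) : n < 15 -> (inord n == a) = (n == a).
Proof. by move=> h; rewrite -(inj_eq val_inj) /= inordK. Qed.

Lemma stsC y : y \in C ->
  exists p : {perm 'I_15}, perm_sets p (STS C y) = STS C (zero_word 15).
Proof.
move=> yC; move: (yC); rewrite memC => /andP [hH /eqP hm].
have Ey : y = addw (catw (addw (lft y) (rgt y)) (lam (addw (lft y) (rgt y)))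
                         (zero_word 7)) (kk (rgt y)).
  by rewrite /kk addw_catw add0w addwK addbC -hm -catw_surj.
rewrite Ey STS_trans; last by move=> w; exact: kC.
move: hH; rewrite inE => /existsP [a /existsP [b /existsP [c /existsP [d /eqP Eh]]]].
rewrite Eh Hcomb_dec.
set hl := HcL a b c d.
have shl : size hl = 7 by rewrite size_HcL.
rewrite hlam // zero_dec catw_dec ?size_nseq //.
case/and3P: hc => _ _ /allP /(_ hl (HcL_in a b c d)) /=.
set s := lookup tab hl; case/and4P => us /eqP ss /allP sb ht.
pose f (i : 'I_15) : 'I_15 := inord (nth 0 s i).
have sb' : forall i : 'I_15, nth 0 s i < 15.
  by move=> i; apply: sb; apply: mem_nth; rewrite ss.
have fv : forall i, (f i : nat) = nth 0 s i by move=> i; rewrite inordK.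
have finj : injective f.
  move=> i j /(congr1 val) /=; rewrite !inordK // => /eqP; rewrite nth_uniq ?ss //.
  by move/eqP; apply: val_inj.
exists (perm finj); rewrite perm_setsE !STS_eq; apply/setP => B.
rewrite !inE card_imset; last exact: perm_inj.
case B3: (#|B| == 3) => //=.
have [a' [b' [c' hB]]] := card3 (eqP B3).
have E1 : indw [set (perm finj)^-1%g i | i in B] = dec 15 (indL s a' b' c').
  apply/ffunP => i; rewrite !ffunE (nth_map 0) ?size_iota // nth_iota //.
  rewrite -{1}(permK (perm finj) i) mem_imset; last exact: perm_inj.
  by rewrite hB permE /f !inord_eq.
have E0 : addw (indw B) (zero_word 15) = dec 15 (indL (iota 0 15) a' b' c').
  apply/ffunP => i; have hi := ltn_ord i; rewrite !ffunE (nth_map 0) ?size_iota // !nth_iota ?add0n //.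
  by rewrite addbF; apply: hB.
rewrite E1 E0 addw_dec ?size_map ?size_iota ?size_cat ?shl ?size_nseq //.
rewrite !memCd ?size_xorL ?size_map ?size_iota ?size_cat ?shl ?size_nseq //.
have ha : forall x : 'I_15, (x : nat) \in iota 0 15 by move=> x; rewrite mem_iota ltn_ord.
move/allP: ht => /(_ a' (ha a')) /allP /(_ b' (ha b')) /allP /(_ c' (ha c')) /eqP.
done.
Qed.

Theorem homogC : homogeneous C.
Proof. split; [exact: perfC | exact: zeroC | exact: stsC]. Qed.

End Main.

Theorem lemma3 :
  homogeneous (Vasiliev H7 lambda1) /\ homogeneous (Vasiliev H7 lambda2).
Proof.
split; [exact: (homogC lam1_dec chk1) | exact: (homogC lam2_dec chk2)].
Qed.
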